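(* Let $A:\mathbb{R}^N\to\mathbb{R}^{N\times N}$ be such that $A(y)$ is symmetric positive semidefinite for all $y$ and $\|A(u)-A(v)\|\le L\|u-v\|$ for all $u,v$, with $L>0$. Let $t_n\in\mathbb{R}$, $\Delta t>0$, $y^n,g^{n+1}\in\mathbb{R}^N$, and let $\tilde y:[t_n,t_n+\Delta t]\to\mathbb{R}^N$ solve $$\tilde y'(t)=-A(\tilde y(t))\tilde y(t)+g^{n+1},\qquad \tilde y(t_n)=y^n.$$ Define $\tilde y^{(0)}(t)\equiv y^n$ and, for $m\ge0$, $\tilde y^{(m+1)}$ as the solution on $[t_n,t_n+\Delta t]$ of $(\tilde y^{(m+1)})'(t)=-A(\tilde y^{(m)}(t))\tilde y^{(m+1)}(t)+g^{n+1}$, $\tilde y^{(m+1)}(t_n)=y^n$. Let $\omega\ge 0$ be such that $(A(\tilde y^{(m)}(t))x,x)\ge\omega(x,x)$ for all $x\in\mathbb{R}^N$, all $t\in[t_n,t_n+\Delta t]$ and all $m\ge0$. If $$\Delta t\,\varphi(-\Delta t\,\omega)\,L\max_{s\in[t_n,t_n+\Delta t]}\|\tilde y(s)\|<1,$$ then $$\max_{s\in[t_n,t_n+\Delta t]}\|\tilde y(s)-\tilde y^{(m+1)}(s)\|\le \Delta t\,\varphi(-\Delta t\omega)\,L\max_{s}\|\tilde y(s)\|\;\max_{s\in[t_n,t_n+\Delta t]}\|\tilde y(s)-\tilde y^{(m)}(s)\|$$ for all $m\ge0$, and consequently $\max_{s\in[t_n,t_n+\Delta t]}\|\tilde y(s)-\tilde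 y^{(m)}(s)\|\to0$ as $m\to\infty$.
   Context: $(x,y)=y^Tx$ is the standard inner product; $\|\cdot\|$ is the Euclidean vector norm and induced matrix norm. $\varphi(z)=(e^z-1)/z$ with $\varphi(0)=1$; for $t\ge0$, $t\varphi(-t\omega)=t$ if $\omega=0$ and $=(1-e^{-t\omega})/\omega$ if $\omega>0$. *)

(* Defs.v *)
From HB Require Import structures.
From mathcomp Require Import all_boot all_order all_algebra.
From mathcomp Require Import all_classical all_reals all_analysis.
Set Implicit Arguments. Unset Strict Implicit. Unset Printing Implicit Defensive.
Import Order.TTheory GRing.Theory Num.Theory.
Import numFieldNormedType.Exports.
Local Open Scope classical_set_scope.
Local Open Scope ring_scope.

Definition dotv (R : realType) (N : nat) (x y : 'cV[R]_N) : R := (y^T *m x) 0 0.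

Definition vnorm (R : realType) (N : nat) (x : 'cV[R]_N) : R := Num.sqrt (dotv x x).

Definition opnorm (R : realType) (N : nat) (M : 'M[R]_N) : R :=
  sup [set vnorm (M *m x) | x in [set x : 'cV[R]_N | vnorm x <= 1]].

Definition phi (R : realType) (z : R) : R :=
  if z == 0 then 1 else (expR z - 1) / z.

(* max over s in [a,b] of ||f s|| (a sup; a max for continuous f) *)
Definition maxI (R : realType) (N : nat) (a b : R) (f : R -> 'cV[R]_N) : R :=
  sup [set vnorm (f s) | s in `[a, b]].

Definition solves (R : realType) (N : nat) (a b : R)
    (F : R -> 'cV[R]_N -> 'cV[R]_N) (y0 : 'cV[R]_N) (y : R -> 'cV[R]_N) : Prop :=
  y a = y0 /\
  (forall i : 'I_N, {within `[a, b], continuous (fun s => y s i 0)}) /\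
  (forall t, a < t < b -> forall i : 'I_N,
      is_derive t 1 (fun s => y s i 0) ((F t (y t)) i 0)).

(* Main.v *)
Require Import Defs.
From HB Require Import structures.
From mathcomp Require Import all_boot all_order all_algebra.
From mathcomp Require Import all_classical all_reals all_analysis.
From mathcomp.algebra_tactics Require Import ring lra.
Import Order.TTheory GRing.Theory Num.Theory.
Import numFieldNormedType.Exports.
Local Open Scope classical_set_scope.
Local Open Scope ring_scope.

Section Aux.
Variable R : realType.
Variable N : nat.
Implicit Types x y z : 'cV[R]_N.

Lemma dotvE x y : dotv x y = \sum_i x i 0 * y i 0.
Proof. by rewrite /dotv !mxE; apply: eq_bigr => i _; rewrite mxE mulrC. Qed.

Lemma dotv_ge0 x : 0 <= dotv x x.
Proof. by rewrite dotvE sumr_ge0 // => i _; rewrite -expr2 sqr_ge0. Qed.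

Lemma vnorm_ge0 x : 0 <= vnorm x.
Proof. exact: sqrtr_ge0. Qed.

Lemma vnorm_sq x : vnorm x ^+ 2 = dotv x x.
Proof. by rewrite /vnorm sqr_sqrtr // dotv_ge0. Qed.

Lemma single_le (F : 'I_N -> R) j : (forall i, 0 <= F i) -> F j <= \sum_i F i.
Proof.
move=> F0; rewrite (bigD1 j) //= lerDl sumr_ge0 //.
Qed.

Lemma comp_le x j : `|x j 0| <= vnorm x.
Proof.
rewrite -(sqrtr_sqr (x j 0)) /vnorm ler_sqrt ?dotv_ge0 // dotvE.
by apply: (single_le (fun i => x i 0 * x i 0)) => i; rewrite -expr2 sqr_ge0.
Qed.

Lemma vnorm_le_sum x : vnorm x <= \sum_i `|x i 0|.
Proof.
have S0 : 0 <= \sum_i `|x i 0| by rewrite sumr_ge0.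
rewrite -(ger0_norm S0) -(sqrtr_sqr (\sum_i _)) /vnorm ler_sqrt ?sqr_ge0 //.
rewrite dotvE expr2 mulr_sumr; apply: ler_sum => i _.
apply: le_trans (ler_norm _) _; rewrite normrM ler_wpM2r //.
exact: (single_le (fun i => `|x i 0|)).
Qed.

Lemma comp0 x j : vnorm x = 0 -> x j 0 = 0.
Proof. by move=> h; apply/normr0_eq0/le_anti; rewrite normr_ge0 -h comp_le. Qed.

Lemma cauchy_schwarz x y : dotv x y <= vnorm x * vnorm y.
Proof.
set a := vnorm x; set b := vnorm y; set S := dotv x y.
have key : 0 <= \sum_i (b * x i 0 - a * y i 0) ^+ 2 by rewrite sumr_ge0 // => i _; rewrite sqr_ge0.
have E : \sum_i (b * x i 0 - a * y i 0) ^+ 2 =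
   b ^+ 2 * dotv x x - 2 * a * b * S + a ^+ 2 * dotv y y.
  rewrite /S !dotvE !mulr_sumr -sumrB -big_split /=; apply: eq_bigr => i _; ring.
rewrite E -!vnorm_sq -/a -/b in key.
have a0 : 0 <= a by apply: vnorm_ge0.
have b0 : 0 <= b by apply: vnorm_ge0.
have [ab0|] := ltP 0 (a * b); first by nra.
move=> hab; have : a * b == 0 by rewrite eq_le hab mulr_ge0.
rewrite mulf_eq0 => /orP [] /eqP h; unfold a, b in h;
  rewrite /S dotvE big1 ?mulr_ge0 // => i _; first by rewrite (comp0 _ i h) mul0r. by rewrite (comp0 _ i h) mulr0.
Qed.

Lemma dotvZ c x : dotv (c *: x) (c *: x) = c ^+ 2 * dotv x x.
Proof. by rewrite !dotvE mulr_sumr; apply: eq_bigr => i _; rewrite !mxE; ring. Qed.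

Lemma vnormZ c x : vnorm (c *: x) = `|c| * vnorm x.
Proof. by rewrite /vnorm dotvZ sqrtrM ?sqr_ge0 // sqrtr_sqr. Qed.

Lemma vnorm0 : vnorm (0 : 'cV[R]_N) = 0.
Proof. by rewrite -(scale0r (0 : 'cV[R]_N)) vnormZ normr0 mul0r. Qed.

Lemma opnorm_bounded (M : 'M[R]_N) :
  has_ubound [set vnorm (M *m x) | x in [set x : 'cV[R]_N | vnorm x <= 1]].
Proof.
exists (\sum_i \sum_j `|M i j|) => _ [x /= hx <-].
apply: le_trans (vnorm_le_sum _) _; apply: ler_sum => i _.
rewrite mxE; apply: le_trans (ler_norm_sum _ _ _) _; apply: ler_sum => j _.
rewrite normrM ler_piMr //; apply: le_trans hx; exact: comp_le.
Qed.

Lemma opnorm_le (M : 'M[R]_N) x : vnorm (M *m x) <= opnorm M * vnorm x.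
Proof.
have [x0|xp] := eqVneq (vnorm x) 0.
  have -> : x = 0 by apply/matrixP => i j; rewrite (ord1 j) mxE comp0.
  by rewrite mulmx0 vnorm0 mulr0.
have xpos : 0 < vnorm x by rewrite lt_neqAle eq_sym xp vnorm_ge0.
rewrite -ler_pdivrMr //.
have -> : vnorm (M *m x) / vnorm x = vnorm (M *m ((vnorm x)^-1 *: x)).
  by rewrite -scalemxAr vnormZ ger0_norm ?invr_ge0 ?vnorm_ge0 // mulrC.
apply: ub_le_sup; first exact: opnorm_bounded.
exists ((vnorm x)^-1 *: x) => //=.
by rewrite vnormZ ger0_norm ?invr_ge0 ?vnorm_ge0 // mulVf.
Qed.


Lemma maxI_ub a b (f : R -> 'cV[R]_N) s :
  (exists B, forall s, a <= s <= b -> vnorm (f s) <= B) -> a <= s <= b ->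
  vnorm (f s) <= maxI a b f.
Proof.
move=> [B hB] hs; apply: ub_le_sup.
  by exists B => _ [t /= ht <-]; apply: hB; rewrite in_itv /= in ht.
by exists s => //=; rewrite in_itv /=.
Qed.

Lemma maxI_le a b (f : R -> 'cV[R]_N) C : a <= b ->
  (forall s, a <= s <= b -> vnorm (f s) <= C) -> maxI a b f <= C.
Proof.
move=> ab hC; apply: ge_sup.
  by exists (vnorm (f a)), a => //=; rewrite in_itv /= lexx ab.
by move=> _ [t /= ht <-]; apply: hC; rewrite in_itv /= in ht.
Qed.

Lemma maxI_ge0 a b (f : R -> 'cV[R]_N) : a <= b ->
  (exists B, forall s, a <= s <= b -> vnorm (f s) <= B) -> 0 <= maxI a b f.
Proof.
move=> ab hB; apply: le_trans (vnorm_ge0 (f a)) _; apply: maxI_ub => //.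
by rewrite lexx ab.
Qed.

Lemma comp_bounded a b (h : R -> R) : a <= b ->
  {within `[a, b], continuous h} -> exists B, forall s, a <= s <= b -> `|h s| <= B.
Proof.
move=> ab ch; have [c1 _ H1] := EVT_max ab ch; have [c2 _ H2] := EVT_min ab ch.
exists (`|h c1| + `|h c2|) => s hs.
have h1 : h s <= h c1 by apply: H1; rewrite in_itv /=.
have h2 : h c2 <= h s by apply: H2; rewrite in_itv /=.
have := ler_norm (h c1); have := ler_norm (- h c2); rewrite normrN => g1 g2.
have := normr_ge0 (h c1); have := normr_ge0 (h c2) => g3 g4.
rewrite ler_norml; apply/andP; split; lra.
Qed.

Lemma vec_bounded a b (f : R -> 'cV[R]_N) :
  (forall i : 'I_N, exists B, forall s, a <= s <= b -> `|f s i 0| <= B) ->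
  exists B, forall s, a <= s <= b -> vnorm (f s) <= B.
Proof.
move=> /fin_all_exists [B hB]; exists (\sum_i B i) => s hs.
by apply: le_trans (vnorm_le_sum _) _; apply: ler_sum => i _; apply: hB.
Qed.

End Aux.

Section Core.
Variable R : realType.
Variable N : nat.

Lemma within_continuousM (A : set R) (f g : R -> R) :
  {within A, continuous f} -> {within A, continuous g} ->
  {within A, continuous (fun s => f s * g s)}.
Proof. by move=> cf cg x; apply: cvgM; [exact: cf|exact: cg]. Qed.

Lemma within_sum (A : set R) (g : 'I_N -> R -> R) :
  (forall i, {within A, continuous (g i)}) ->
  {within A, continuous (fun s => \sum_i g i s)}.
Proof.
move=> hg.
have -> : (fun s => \sum_i g i s) = \sum_i g i by rewrite fct_sumE.
elim/big_ind: _ => //.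
- exact: continuous_subspaceT (@cst_continuous _ _ 0).
- by move=> f1 f2 c1 c2; apply: within_continuousD.
Qed.

Lemma derive_dot (e d : R -> 'cV[R]_N) (t : R) :
  (forall i, is_derive t 1 (fun s => e s i 0) (d t i 0)) ->
  is_derive t 1 (fun s => dotv (e s) (e s)) (2 * dotv (d t) (e t)).
Proof.
move=> hd.
have -> : (fun s => dotv (e s) (e s)) = \sum_i (fun s => e s i 0 * e s i 0).
  by rewrite fct_sumE; apply/funext => s; rewrite dotvE.
have H := @is_derive_sum _ R^o R^o N (fun i s => e s i 0 * e s i 0) t 1 _
  (fun i => is_deriveM (f := fun s => e s i 0) (g := fun s => e s i 0) (hd i) (hd i)).
apply: (is_derive_eq H).
rewrite dotvE mulr_sumr; apply: eq_bigr => i _ /=; rewrite /GRing.scale /=; ring.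
Qed.


Lemma cont_of_derive (f : R -> R) (df : R -> R) :
  (forall x : R, is_derive x 1 f (df x)) -> continuous f.
Proof.
move=> hf x; apply: differentiable_continuous; apply/derivable1_diffP.
exact: ex_derive.
Qed.

Lemma derive_E (om a x : R) :
  is_derive x 1 (fun s => expR (om * (s - a))) (expR (om * (x - a)) * om).
Proof.
have H1 : is_derive x 1 (fun s : R => om * (s - a)) om.
  by apply: is_derive_eq; rewrite subr0 /GRing.scale /= mulr1.
exact: (is_derive1_comp (f := expR) (is_derive_expR _) H1).
Qed.


Lemma gron_eps (a b : R) (e d : R -> 'cV[R]_N) (om K eps : R) (h : R -> R) :
  a < b -> 0 < eps -> 0 <= om -> 0 <= K -> e a = 0 ->
  (forall i, {within `[a, b], continuous (fun s => e s i 0)}) ->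
  (forall t, a < t < b -> forall i, is_derive t 1 (fun s => e s i 0) (d t i 0)) ->
  (forall t, a < t < b ->
     dotv (d t) (e t) <= - om * dotv (e t) (e t) + K * vnorm (e t)) ->
  h a = 0 -> (forall t : R, is_derive t 1 h (expR (om * (t - a)))) ->
  forall t, a <= t <= b ->
  expR (om * (t - a)) * Num.sqrt (dotv (e t) (e t) + eps ^+ 2)
    <= eps + (K + om * eps) * h t.
Proof.
move=> ab eps0 om0 K0 ea0 ce de Dle ha0 dh t /andP [hat tb].
pose u s := dotv (e s) (e s).
pose w s := Num.sqrt (u s + eps ^+ 2).
pose E s := expR (om * (s - a)).
pose c := K + om * eps.
pose G s := E s * w s - c * h s.
have u0 s : 0 <= u s by exact: dotv_ge0.
have Ga : G a = eps.
  rewrite /G /E /w /u ea0 ha0 subrr mulr0 expR0 mul1r mulr0 subr0.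
  have -> : dotv (0 : 'cV[R]_N) 0 = 0 by rewrite dotvE big1 // => i _; rewrite mxE mul0r.
  by rewrite add0r sqrtr_sqr gtr0_norm.
suff : G t <= G a by rewrite Ga /G lerBlDr.
have hG : forall x, a < x < b -> is_derive x 1 G
    (E x * ((2 * w x)^-1 * (2 * dotv (d x) (e x))) + w x * (E x * om) - c * E x).
  move=> x hx.
  have Hu := @derive_dot e d x (de x hx).
  have Hu2 : is_derive x 1 (fun s => u s + eps ^+ 2) (2 * dotv (d x) (e x)).
    by apply: is_derive_eq (is_deriveD Hu (is_derive_cst (eps ^+ 2) x 1)) _; rewrite addr0.
  have upos : 0 < u x + eps ^+ 2 by rewrite ltr_wpDl // exprn_gt0.
  have Hw := @is_derive1_comp R Num.sqrt (fun s => u s + eps ^+ 2) x _ _ (is_derive1_sqrt upos) Hu2.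
  have H1 := is_deriveM (derive_E om a x) Hw.
  have H2 := is_deriveM (is_derive_cst c x 1) (dh x).
  apply: is_derive_eq (is_deriveB H1 H2) _.
  rewrite /GRing.scale /= /w /E /c /u; ring.
apply: (ler0_derive1_nincr (a := a) (b := b)) => //.
- move=> x; rewrite in_itv /= => /hG hx; exact: ex_derive.
- move=> x; rewrite in_itv /= => hx; have hGx := hG x hx; rewrite derive1E derive_val.
  have xin : a < x < b by [].
  set W := w x.
  have W2 : W ^+ 2 = u x + eps ^+ 2 by rewrite /W /w sqr_sqrtr // addr_ge0 // sqr_ge0.
  have sW : Num.sqrt (u x) <= W by rewrite /W /w ler_sqrt ?lerDl ?sqr_ge0 // addr_ge0 // sqr_ge0.
  have eW : eps <= W.
    rewrite -(gtr0_norm eps0) -sqrtr_sqr /W /w ler_sqrt ?lerDr //.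
    exact: addr_ge0 (u0 x) (sqr_ge0 _).
  have W0 : 0 < W by apply: lt_le_trans eW.
  have Dl := Dle x xin; rewrite -/(u x) /vnorm -/(u x) in Dl.
  set D := dotv (d x) (e x) in Dl *.
  have E0 : 0 < E x by rewrite /E expR_gt0.
  have -> : (2 * W)^-1 * (2 * D) = D / W.
    have two0 : (2:R) != 0 by apply/negP => /eqP; lra.
    by rewrite invfM mulrACA mulVf ?mul1r // mulrC.
  set Q := D / W.
  have QW : Q * W = D by rewrite /Q divfK // gt_eqF.
  have k1 : K * (Num.sqrt (u x) - W) <= 0 by rewrite mulr_ge0_le0 // subr_le0.
  have k2 : om * eps * (eps - W) <= 0 by rewrite mulr_ge0_le0 ?mulr_ge0 ?subr_le0 // ltW.
  have key : (Q + W * om - c) * W <= 0.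
    rewrite /c; nra.
  rewrite pmulr_lle0 // in key.
  have -> : E x * Q + W * (E x * om) - c * E x = E x * (Q + W * om - c) by ring.
  by rewrite pmulr_rle0.
- have cu : {within `[a, b], continuous u}.
    have -> : u = fun s => \sum_i e s i 0 * e s i 0.
      by apply/funext => s; rewrite /u dotvE.
    by apply: within_sum => i; apply: within_continuousM; apply: ce.
  have cw : {within `[a, b], continuous w}.
    apply: (@within_continuous_comp _ _ _ _ (fun s => u s + eps ^+ 2) Num.sqrt).
      by move=> y _; apply: sqrt_continuous.
    apply: within_continuousD cu _.
    exact: continuous_subspaceT (@cst_continuous _ _ (eps ^+ 2)).
  have cE : {within `[a, b], continuous E}.
    apply: continuous_subspaceT.
    exact: (@cont_of_derive E (fun x => expR (om * (x - a)) * om) (derive_E om a)).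
  have ch : {within `[a, b], continuous h}.
    apply: continuous_subspaceT.
    exact: (@cont_of_derive h (fun x => expR (om * (x - a))) dh).
  apply: (@within_continuousB _ _ _ _ (fun s => E s * w s) (fun s => c * h s)).
    exact: within_continuousM cE cw.
  apply: within_continuousM ch.
  exact: (continuous_subspaceT (@cst_continuous _ _ c)).
Qed.


Lemma gron (a b : R) (e d : R -> 'cV[R]_N) (om K : R) :
  a < b -> 0 <= om -> 0 <= K -> e a = 0 ->
  (forall i, {within `[a, b], continuous (fun s => e s i 0)}) ->
  (forall t, a < t < b -> forall i, is_derive t 1 (fun s => e s i 0) (d t i 0)) ->
  (forall t, a < t < b ->
     dotv (d t) (e t) <= - om * dotv (e t) (e t) + K * vnorm (e t)) ->
  forall t, a <= t <= b -> vnorm (e t) <= (b - a) * phi (- ((b - a) * om)) * K.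
Proof.
move=> ab om0 K0 ea0 ce de Dle t /andP [hat tb].
apply/ler_addgt0Pr => eps eps0.
have u0 : 0 <= dotv (e t) (e t) by apply: dotv_ge0.
have sW : vnorm (e t) <= Num.sqrt (dotv (e t) (e t) + eps ^+ 2).
  by rewrite /vnorm ler_sqrt ?lerDl ?sqr_ge0 // addr_ge0 // sqr_ge0.
apply: le_trans sW _.
set W := Num.sqrt _.
have [om00|omp] := eqVneq om 0.
  rewrite om00 in Dle om0 *.
  have dh : forall x : R, is_derive x 1 (fun s => s - a) (expR (0 * (x - a))).
    by move=> x; apply: is_derive_eq; rewrite mul0r expR0 subr0.
  have := @gron_eps a b e d 0 K eps (fun s => s - a) ab eps0 (lexx 0) K0 ea0 ce de Dle (subrr a) dh t.
  rewrite hat tb mul0r expR0 mul1r mul0r addr0 => /(_ isT); rewrite -/W => H.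
  rewrite mulr0 oppr0 /phi eqxx mulr1.
  have : K * (t - a) <= K * (b - a) by rewrite ler_wpM2l // lerB.
  lra.
have om0' : 0 < om by rewrite lt_neqAle eq_sym omp.
pose h s := (expR (om * (s - a)) - 1) / om.
have dh : forall x : R, is_derive x 1 h (expR (om * (x - a))).
  move=> x; have H := derive_E om a x.
  have H2 := is_deriveB H (@is_derive_cst _ R^o R^o 1 x 1).
  have H3 := is_deriveM H2 (@is_derive_cst _ R^o R^o om^-1 x 1).
  apply: is_derive_eq H3 _.
  by rewrite /GRing.scale /= mulr0 add0r subr0 mulrC mulfK.
have ha : h a = 0 by rewrite /h subrr mulr0 expR0 subrr mul0r.
have := @gron_eps a b e d om K eps h ab eps0 om0 K0 ea0 ce de Dle ha dh t.
rewrite hat tb => /(_ isT); rewrite -/W => H.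
set Et := expR (om * (t - a)) in H.
have Et0 : 0 < Et by apply: expR_gt0.
set Eb := expR (om * (b - a)).
have Eb0 : 0 < Eb by apply: expR_gt0.
have EtEb : Et <= Eb by rewrite /Et /Eb ler_expR ler_wpM2l // lerB.
have iE : Eb^-1 <= Et^-1 by rewrite lef_pV2 ?posrE.
have -> : (b - a) * phi (- ((b - a) * om)) = (1 - Eb^-1) / om.
  rewrite /phi oppr_eq0 mulf_eq0 subr_eq0 (negbTE omp) orbF.
  rewrite eq_sym (lt_eqF ab) expRN (mulrC (b - a) om) -/Eb; field.
  by rewrite omp gt_eqF //= subr_eq0 eq_sym (lt_eqF ab).
have H1 : W <= eps + K * (1 - Et^-1) / om.
  rewrite -(ler_pM2l Et0).
  have -> : Et * (eps + K * (1 - Et^-1) / om) = eps + (K + om * eps) * h t.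
    rewrite /h -/Et; field; by rewrite omp gt_eqF.
  lra.
have : K * (1 - Et^-1) / om <= K * (1 - Eb^-1) / om.
  rewrite ler_pM2r ?invr_gt0 // ler_wpM2l // lerB //.
lra.
Qed.

End Core.

Lemma phi_ge0 (R : realType) (z : R) : z <= 0 -> 0 <= phi z.
Proof.
rewrite /phi; case: eqP => // z0 zle.
have zlt : z < 0 by rewrite lt_neqAle zle andbT; apply/eqP.
apply: mulr_le0; last by rewrite invr_le0.
by rewrite subr_le0 -expR0 ler_expR.
Qed.

Lemma dotvN (R : realType) N (x y : 'cV[R]_N) : dotv (- x) y = - dotv x y.
Proof. by rewrite !dotvE -sumrN; apply: eq_bigr => i _; rewrite mxE mulNr. Qed.

Lemma dotvD (R : realType) N (x z y : 'cV[R]_N) : dotv (x + z) y = dotv x y + dotv z y.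
Proof. by rewrite !dotvE -big_split; apply: eq_bigr => i _; rewrite mxE mulrDl. Qed.

Lemma vnormN (R : realType) N (x : 'cV[R]_N) : vnorm (- x) = vnorm x.
Proof. by rewrite -scaleN1r vnormZ normrN normr1 mul1r. Qed.

Lemma conv_geom (R : realType) (D : nat -> R) (q : R) :
  0 <= q < 1 -> (forall m, 0 <= D m) -> (forall m, D m.+1 <= q * D m) ->
  D @ \oo --> (0 : R).
Proof.
move=> /andP [q0 q1] D0 Dle.
have bnd : forall m, D m <= q ^+ m * D 0%N.
  elim=> [|m IH]; first by rewrite expr0 mul1r.
  by apply: le_trans (Dle m) _; rewrite exprS -mulrA ler_wpM2l.
apply: (@squeeze_cvgr _ _ _ _ (cst 0) (fun m => q ^+ m * D 0%N)).
- by apply: nearW => m; rewrite D0 bnd.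
- exact: cvg_cst.
- have -> : (0 : R) = 0 * D 0%N by rewrite mul0r.
  apply: cvgMl; apply: cvg_expr; rewrite ger0_norm //.
Qed.

Theorem corollary4 (R : realType) (N : nat) (A : 'cV[R]_N -> 'M[R]_N) (L : R)
  (tn dt omega : R) (yn g : 'cV[R]_N) (yt : R -> 'cV[R]_N)
  (Y : nat -> R -> 'cV[R]_N) :
  (forall y, (A y)^T = A y) ->
  (forall y x, 0 <= dotv (A y *m x) x) ->
  (forall u v, opnorm (A u - A v) <= L * vnorm (u - v)) ->
  0 < L -> 0 < dt ->
  solves tn (tn + dt) (fun _ y => - (A y *m y) + g) yn yt ->
  (forall t, tn <= t <= tn + dt -> Y 0%N t = yn) ->
  (forall m : nat, solves tn (tn + dt)
      (fun t y => - (A (Y m t) *m y) + g) yn (Y m.+1)) ->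
  0 <= omega ->
  (forall (m : nat) t (x : 'cV[R]_N), tn <= t <= tn + dt ->
      omega * dotv x x <= dotv (A (Y m t) *m x) x) ->
  dt * phi (- (dt * omega)) * L * maxI tn (tn + dt) yt < 1 ->
  (forall m : nat,
     maxI tn (tn + dt) (fun s => yt s - Y m.+1 s)
     <= dt * phi (- (dt * omega)) * L * maxI tn (tn + dt) yt
        * maxI tn (tn + dt) (fun s => yt s - Y m s)) /\
  (fun m : nat => maxI tn (tn + dt) (fun s => yt s - Y m s)) @ \oo --> (0 : R).
Proof.
move=> _ _ HL L0 dt0 [yta [cyt dyt]] HY0 HY om0 Hom Hq.
set a := tn; set b := tn + dt.
have ab : a < b by rewrite /a /b ltrDl.
have ab' : a <= b by apply: ltW.
have ba : b - a = dt by rewrite /a /b addrAC subrr add0r.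
have byt : forall i : 'I_N, exists B, forall s, a <= s <= b -> `|yt s i 0| <= B.
  by move=> i; apply: comp_bounded.
have bY : forall m (i : 'I_N), exists B, forall s, a <= s <= b -> `|Y m s i 0| <= B.
  case=> [|m] i.
    by exists `|yn i 0| => s hs; rewrite HY0.
  by apply: comp_bounded => //; have [_ [c _]] := HY m; apply: c.
have bD : forall m, exists B, forall s, a <= s <= b -> vnorm (yt s - Y m s) <= B.
  move=> m; apply: vec_bounded => i.
  have [B1 h1] := byt i; have [B2 h2] := bY m i.
  exists (B1 + B2) => s hs; rewrite !mxE.
  apply: le_trans (ler_normB _ _) _; apply: lerD; [exact: h1 | exact: h2].
have bM : exists B, forall s, a <= s <= b -> vnorm (yt s) <= B by apply: vec_bounded.
set M := maxI a b yt.
have M0 : 0 <= M by apply: maxI_ge0.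
set q := dt * phi (- (dt * omega)) * L * M.
have q0 : 0 <= q.
  have p0 : 0 <= phi (- (dt * omega)) by apply: phi_ge0; rewrite oppr_le0 mulr_ge0 // ltW.
  by rewrite /q !mulr_ge0 // ltW.
have step : forall m, maxI a b (fun s => yt s - Y m.+1 s) <= q * maxI a b (fun s => yt s - Y m s).
  move=> m.
  set D := maxI a b (fun s => yt s - Y m s).
  have D0 : 0 <= D by apply: maxI_ge0.
  have [Ya [cY dY]] := HY m.
  pose e s := yt s - Y m.+1 s.
  pose d s := (- (A (yt s) *m yt s) + g) - (- (A (Y m s) *m Y m.+1 s) + g).
  have K0 : 0 <= L * M * D by rewrite !mulr_ge0 // ltW.
  have ea : e a = 0 by rewrite /e yta Ya subrr.
  have ce : forall i, {within `[a, b], continuous (fun s => e s i 0)}.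
    move=> i; have -> : (fun s => e s i 0) = (fun s => yt s i 0 - Y m.+1 s i 0).
      by apply/funext => s; rewrite /e !mxE.
    exact: (@within_continuousB _ _ _ _ (fun s => yt s i 0) (fun s => Y m.+1 s i 0)).
  have de : forall t, a < t < b -> forall i, is_derive t 1 (fun s => e s i 0) (d t i 0).
    move=> t ht i; have -> : (fun s => e s i 0) = (fun s => yt s i 0 - Y m.+1 s i 0).
      by apply/funext => s; rewrite /e !mxE.
    apply: is_derive_eq (is_deriveB (dyt t ht i) (dY t ht i)) _.
    by rewrite /d !mxE.
  have Dle : forall t, a < t < b ->
      dotv (d t) (e t) <= - omega * dotv (e t) (e t) + L * M * D * vnorm (e t).
    move=> t /andP [t1 t2].
    have ht : tn <= t <= tn + dt by rewrite ltW // ltW.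
    have hd : d t = - (A (Y m t) *m e t) + - ((A (yt t) - A (Y m t)) *m yt t).
      rewrite /d /e mulmxBr mulmxBl; apply/matrixP => i j; rewrite !mxE; ring.
    rewrite hd dotvD !dotvN.
    have h1 := Hom m t (e t) ht.
    have h2 := @cauchy_schwarz R N (- ((A (yt t) - A (Y m t)) *m yt t)) (e t).
    rewrite dotvN vnormN in h2.
    have h3 := @opnorm_le R N (A (yt t) - A (Y m t)) (yt t).
    have h4 := HL (yt t) (Y m t).
    have h5 : vnorm (yt t - Y m t) <= D by apply: maxI_ub.
    have h6 : vnorm (yt t) <= M by apply: maxI_ub.
    have h7 : vnorm ((A (yt t) - A (Y m t)) *m yt t) <= L * M * D.
      apply: le_trans h3 _; apply: le_trans (ler_wpM2r (@vnorm_ge0 R N _) h4) _.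
      apply: le_trans (ler_wpM2r (@vnorm_ge0 R N _) (ler_wpM2l (ltW L0) h5)) _.
      rewrite [L * M * D]mulrAC; exact: (ler_wpM2l (mulr_ge0 (ltW L0) D0) h6).
    have h8 := ler_wpM2r (@vnorm_ge0 R N (e t)) h7.
    lra.
  have Hg := @gron R N a b e d omega (L * M * D) ab om0 K0 ea ce de Dle.
  apply: maxI_le => // s hs; apply: le_trans (Hg s hs) _.
  by rewrite ba /q !mulrA.
split; first exact: step.
apply: (@conv_geom R _ q) => //.
- by rewrite q0 Hq.
- by move=> m; apply: maxI_ge0.
Qed.
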